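(* Let $m,k\in\mathbb{N}$ and let $\alpha,\beta\in\mathbb{C}$ with $\alpha,\beta,1+\alpha+\beta+k\notin\mathbb{Z}_0^-$. Then \[ {}_3F_2\left[\begin{array}{r} -m,\ \alpha,\ \beta;\\ -m-k,\ 1+\alpha+\beta+k;\end{array}1\right]_m=\frac{\left(1+\alpha+k\right)_m\left(1+\beta+k\right)_m}{\left(1+k\right)_m\left(1+\alpha+\beta+k\right)_m}. \]
   Context: $\mathbb{N}=\{1,2,3,\dots\}$, $\mathbb{Z}_0^-=\{0,-1,-2,\dots\}$. For $a\in\mathbb{C}$ and $n\in\mathbb{N}_0$, $(a)_0=1$ and $(a)_n=a(a+1)\cdots(a+n-1)$. For $N\in\mathbb{N}_0$, ${}_3F_2\left[\begin{array}{r} a_1,a_2,a_3;\\ b_1,b_2;\end{array}z\right]_N=\sum_{n=0}^{N}\frac{(a_1)_n(a_2)_n(a_3)_n}{(b_1)_n(b_2)_n}\frac{z^n}{n!}$ (the sum of the first $N+1$ terms), defined whenever $(b_1)_n(b_2)_n\neq0$ for $0\le n\le N$. *)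

(* Defs.v *)
From mathcomp Require Import all_boot all_order all_algebra.
From mathcomp Require Import complex.
From mathcomp Require Import reals.
Set Implicit Arguments. Unset Strict Implicit. Unset Printing Implicit Defensive.
Import Order.TTheory GRing.Theory Num.Theory.
Local Open Scope ring_scope.

Definition poch {F : pzRingType} (a : F) (n : nat) : F :=
  \prod_(i < n) (a + i%:R).

Definition nonpos_int {F : pzRingType} (a : F) : Prop :=
  exists j : nat, a = - j%:R.

Definition F32_trunc {F : fieldType} (a1 a2 a3 b1 b2 z : F) (N : nat) : F :=
  \sum_(n < N.+1)
    (poch a1 n * poch a2 n * poch a3 n) / (poch b1 n * poch b2 n)
      * z ^+ n / (n`!)%:R.

(* Main.v *)
Require Import Defs.
From mathcomp Require Import all_boot all_order all_algebra.
From mathcomp Require Import ring lra zify.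
From mathcomp Require Import complex.
From mathcomp Require Import reals.
Import GRing.Theory Num.Theory.
Local Open Scope ring_scope.

Section S.
Variable F : numFieldType.

Lemma pochS (x : F) n : poch x n.+1 = poch x n * (x + n%:R).
Proof. by rewrite /poch big_ord_recr. Qed.

Lemma pochSl (x : F) n : poch x n.+1 = x * poch (x + 1) n.
Proof.
rewrite /poch big_ord_recl /= addr0; congr (_ * _).
by apply: eq_bigr => i _; rewrite /bump /= add1n -nat1r addrA.
Qed.

Lemma poch0 (x : F) : poch x 0 = 1.
Proof. by rewrite /poch big_ord0. Qed.

Variables (a b : F) (k : nat).
Hypothesis hk : (0 < k)%N.
Let D := 1 + a + b + k%:R.
Hypothesis hD : forall i : nat, D + i%:R != 0.

Definition A n := poch a n * poch b n / (poch D n * (n`!)%:R).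
Definition B m n := poch (- m%:R : F) n / poch (- m%:R - k%:R : F) n.
Definition t m n := A n * B m n.

Lemma A_S n : A n.+1 = A n * ((a + n%:R) * (b + n%:R)) / ((D + n%:R) * (n%:R + 1)).
Proof. rewrite /A !pochS factS natrM natr1 !invfM; ring. Qed.

Lemma B_S m n : B m n.+1 = B m n * ((- m%:R + n%:R) / (- m%:R - k%:R + n%:R)).
Proof. rewrite /B !pochS !invfM; ring. Qed.

Lemma B_Sm m n : B m.+1 n.+1 = B m n * ((- (m%:R + 1)) / (- (m%:R + 1) - k%:R)).
Proof.
rewrite /B !pochSl -natr1.
have -> : - (m%:R + 1) + 1 = - m%:R :> F by ring.
have -> : - (m%:R + 1) - k%:R + 1 = - m%:R - k%:R :> F by ring.
rewrite !invfM; ring.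
Qed.


Let u m : F := m%:R + k%:R + 1.
Let c m := (u m + a) * (u m + b) / (u m * (D + m%:R)).
Let lam m := - 1 / (u m * (D + m%:R)).

Lemma u_neq0 m : u m != 0.
Proof.
by rewrite /u -natrD natr1 pnatr_eq0.
Qed.

Lemma key m n : (n <= m)%N ->
  t m.+1 n.+1 - c m * t m n.+1 =
  lam m * (t m n.+1 * ((a + n.+1%:R) * (b + n.+1%:R)) - t m n * ((a + n%:R) * (b + n%:R))).
Proof.
move=> hnm.
have h1 := u_neq0 m.
have h2 := hD m. have h3 := hD n.
have h4 : (n%:R + 1 : F) != 0 by rewrite natr1 pnatr_eq0.
have h5 : (- m%:R - k%:R + n%:R : F) != 0.
  rewrite addrC -opprD -natrD subr_eq0 eqr_nat; apply/negP => /eqP; lia.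
have h6 : (- (m%:R + 1) - k%:R : F) != 0.
  by rewrite -opprD oppr_eq0 -addrA [1 + _]addrC addrA.
rewrite /t A_S B_Sm B_S /c /lam -!natr1.
move: h1 h2 h6; rewrite /u /D => h1 h2 h6.
field; rewrite ?h1 ?h2 ?h3 ?h4 ?h5 ?h6 //.
Qed.


Lemma t0 m : t m 0 = 1.
Proof. by rewrite /t /A /B !poch0 fact0 mulr1n !mul1r !invr1 mulr1. Qed.

Lemma tlast m : t m m.+1 = 0.
Proof. by rewrite /t /B pochS addNr !mulr0 mul0r mulr0. Qed.

Definition Ssum m := \sum_(n < m.+1) t m n.
Definition r m := poch (1 + a + k%:R) m * poch (1 + b + k%:R) m /
  (poch (1 + k%:R) m * poch D m).

Lemma Srec m : Ssum m.+1 = c m * Ssum m.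
Proof.
apply/eqP; rewrite -subr_eq0; apply/eqP.
have L1 : Ssum m.+1 = t m.+1 0 + \sum_(i < m.+1) t m.+1 i.+1 by rewrite /Ssum big_ord_recl.
have L2 : Ssum m = t m 0 + \sum_(i < m.+1) t m i.+1.
  by rewrite /Ssum big_ord_recl [in RHS]big_ord_recr /= tlast addr0.
rewrite L1 L2 mulrDr opprD addrACA mulr_sumr -sumrB.
pose H n := t m n * ((a + n%:R) * (b + n%:R)).
rewrite (eq_bigr (fun i : 'I_m.+1 => lam m * (H i.+1 - H i))); last first.
  by move=> i _; rewrite /H key // -ltnS.
rewrite -mulr_sumr -(big_mkord xpredT (fun i => H i.+1 - H i)) telescope_sumr //.
rewrite /H tlast !t0 addr0 mul0r mul1r sub0r.
have h1 := u_neq0 m. have h2 := hD m.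
move: h1 h2; rewrite /c /lam /u /D => h1 h2.
field; rewrite ?h1 ?h2 //.
Qed.

Lemma S_eq m : Ssum m = r m.
Proof.
elim: m => [|m IH].
  by rewrite /Ssum big_ord1 (t0 0) /r !poch0 mul1r invr1 mulr1.
rewrite Srec IH /r !pochS /c.
have e1 : 1 + a + k%:R + m%:R = u m + a by rewrite /u; ring.
have e2 : 1 + b + k%:R + m%:R = u m + b by rewrite /u; ring.
have e3 : 1 + k%:R + m%:R = u m :> F by rewrite /u; ring.
rewrite e1 e2 e3 !invfM; ring.
Qed.

End S.

Lemma rearr (F : fieldType) (x1 x2 x3 y1 y2 f : F) :
  x1 * x2 * x3 / (y1 * y2) * 1 / f = x2 * x3 / (y2 * f) * (x1 / y1).
Proof. rewrite !invfM mulr1; ring. Qed.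

Local Open Scope complex_scope.

Theorem mainTheorem3 (R : realType) (m k : nat) (alpha beta : R[i])
  (hm : (0 < m)%N) (hk : (0 < k)%N)
  (ha : ~ nonpos_int alpha) (hb : ~ nonpos_int beta)
  (hab : ~ nonpos_int (1 + alpha + beta + k%:R)) :
  F32_trunc (- m%:R) alpha beta (- m%:R - k%:R) (1 + alpha + beta + k%:R) 1 m =
  (poch (1 + alpha + k%:R) m * poch (1 + beta + k%:R) m) /
  (poch (1 + k%:R) m * poch (1 + alpha + beta + k%:R) m).
Proof.
have hD : forall i : nat, 1 + alpha + beta + k%:R + i%:R != 0.
  move=> i; apply/negP => /eqP h; apply: hab; exists i.
  by move/eqP: h; rewrite addr_eq0 => /eqP.
have := @S_eq _ alpha beta k hk hD m; rewrite /Ssum /r => <-.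
rewrite /F32_trunc; apply: eq_bigr => n _.
rewrite expr1n /t /A /B; exact: rearr.
Qed.
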